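(* Let $\Sigma$ be a finite simplicial complex, let $d\ge0$, and suppose $\deg\tau>0$ for all $\tau\in\Sigma_d$. Then for every $p\ge1$, $$\frac{h(\Sigma_d)^p}{|\Sigma_{d+1}|^{p-1}}\le\lambda_{I_d}(\Delta^{up}_{d,p})\le\mathrm{vol}(\Sigma_d)^{p-1}\,h(\Sigma_d).$$
   Context: $B_{d+1}$ is the signed $\Sigma_d\times\Sigma_{d+1}$ incidence matrix of $\Sigma$, with entries $\mathrm{sgn}([\tau],\partial[\sigma])$ for $\tau\subset\sigma$ and $0$ otherwise. For $d\ge1$, $B_d$ is the analogous $\Sigma_{d-1}\times\Sigma_d$ matrix; for $d=0$, $B_0^\top:\mathbb{R}\to\mathbb{R}^{\Sigma_0}$ maps to the constant functions. $\deg\tau$ is the number of $(d+1)$-simplices containing $\tau$, and $\mathrm{vol}(\Sigma_d)=\sum_\tau\deg\tau$. We write $\|\mathbf{x}\|_{p,\deg}^p=\sum_\tau\deg\tau\,|x_\tau|^p$, and $I_d=\mathrm{rank}(B_d)+1$. The first nontrivial eigenvalue of the normalized up $p$-Laplacian is $$\lambda_{I_d}(\Delta^{up}_{d,p})=\min_{\mathbf{x}\ne0,\ \mathbf{x}\perp\mathrm{Im}(B_d^\top)}\frac{\|B_{d+1}^\top\mathbf{x}\|_p^p}{\min_{\mathbf{y}\in\mathrm{Im}(B_d^\top)}\|\mathbf{x}+\mathbf{y}\|_{p,\deg}^p},$$ where $\perp$ is standard Euclidean orthogonality. The Cheeger constant is $$h(\Sigma_d)=\inf_{\mathbf{x}\notin\mathrm{Im}(B_d^\top)}\frac{\|B_{d+1}^\top\mathbf{x}\|_1}{\inf_{\mathbf{z}\in\mathrm{Im}(B_d^\top)}\|\mathbf{x}+\mathbf{z}\|_{1,\deg}}.$$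 *)

(* Defs.v *)
From HB Require Import structures.
From mathcomp Require Import all_boot all_order all_algebra.
From mathcomp Require Import all_classical all_reals all_analysis.
Set Implicit Arguments. Unset Strict Implicit. Unset Printing Implicit Defensive.
Import Order.TTheory GRing.Theory Num.Theory.
Local Open Scope classical_set_scope.
Local Open Scope ring_scope.

Definition is_simplicial_complex (n : nat) (K : {set {set 'I_n}}) : Prop :=
  forall A B : {set 'I_n}, A \in K -> B \subset A -> B \in K.

Section Complex.
Variables (R : realType) (n : nat) (K : {set {set 'I_n}}).

Definition simplex (k : nat) := {A : {set 'I_n} | (A \in K) && (#|A| == k)}.

Definition Sig (d : nat) := simplex d.+1.

(* sgn([tau], boundary [sigma]) with the orientation induced by the vertex
   order: if sigma = {v_0 < ... < v_k} and tau = sigma \ {v_i} then (-1)^i;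
   0 if tau is not a facet of sigma. *)
Definition sgn (tau sigma : {set 'I_n}) : R :=
  if (tau \subset sigma) && (#|sigma :\: tau| == 1)%N then
    match [pick v in sigma :\: tau] with
    | Some v => (-1) ^+ #|[set u in sigma | (u < v)%N]|
    | None => 0
    end
  else 0.

Definition deg (d : nat) (tau : Sig d) : nat :=
  #|[set sigma : Sig d.+1 | val tau \subset val sigma]|.

Definition vol (d : nat) : R := \sum_(tau : Sig d) (deg tau)%:R.

(* B_{d+1}^T x *)
Definition BT (d : nat) (x : Sig d -> R) : Sig d.+1 -> R :=
  fun sigma => \sum_(tau : Sig d) sgn (val tau) (val sigma) * x tau.

(* Im(B_d^T) as a subset of R^{Sigma_d}; for d = 0 the constant functions *)
Definition imBT (d : nat) : set (Sig d -> R) :=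
  match d return set (Sig d -> R) with
  | 0 => [set x | exists c : R, x = fun _ => c]
  | d'.+1 => [set x | exists w : Sig d' -> R,
                 x = fun tau => \sum_(nu : Sig d') sgn (val nu) (val tau) * w nu]
  end.

Definition pnormp (T : finType) (p : R) (y : T -> R) : R :=
  \sum_(i : T) `|y i| `^ p.

Definition pdegnormp (d : nat) (p : R) (x : Sig d -> R) : R :=
  \sum_(tau : Sig d) (deg tau)%:R * `|x tau| `^ p.

Definition dotv (d : nat) (x y : Sig d -> R) : R := \sum_(tau : Sig d) x tau * y tau.

Definition distp (d : nat) (p : R) (x : Sig d -> R) : R :=
  inf [set pdegnormp p (fun tau => x tau + y tau) | y in @imBT d].

Definition lambda_up (d : nat) (p : R) : R :=
  inf [set r | exists x : Sig d -> R,
         x <> (fun _ => 0) /\ (forall y, @imBT d y -> dotv x y = 0) /\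
         r = pnormp p (BT x) / distp p x].

Definition cheeger (d : nat) : R :=
  inf [set r | exists x : Sig d -> R,
         ~ @imBT d x /\ r = pnormp 1 (BT x) / distp 1 x].

End Complex.

(* Main.v *)
Require Import Defs.
From HB Require Import structures.
From mathcomp Require Import all_boot all_order all_algebra.
From mathcomp Require Import all_classical all_reals all_analysis.
From mathcomp Require Import ring lra zify.
Set Implicit Arguments. Unset Strict Implicit. Unset Printing Implicit Defensive.
Import Order.TTheory GRing.Theory Num.Theory.
Local Open Scope ring_scope.


Lemma bernoulliR (R : realType) (p s : R) : 1 <= p -> 0 <= s ->
  1 + p * (s - 1) <= s `^ p.
Proof.
move=> p1 s0.
have [->|pn1] := eqVneq p 1; first by rewrite powRr1 //; lra.
have p1' : 1 < p by rewrite lt_neqAle eq_sym pn1.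
have p0 : 0 < p by lra.
have pm0 : 0 < p - 1 by lra.
pose q := p / (p - 1).
have q0 : 0 < q by rewrite /q divr_gt0.
have pq : p^-1 + q^-1 = 1.
  rewrite /q invf_div; field; lra.
have := conjugate_powR s0 ler01 p0 q0 pq.
rewrite mulr1 powR1 /q invf_div => h.
have : p * s <= s `^ p + (p - 1).
  move: h; set X := s `^ p. idtac.

  have -> : X / p + 1 * ((p - 1) / p) = (X + (p - 1)) / p by field; lra.
  by rewrite ler_pdivlMr // mulrC.
lra.
Qed.

Lemma jensenR (R : realType) (T : finType) (w a : T -> R) (p : R) : 1 <= p ->
  (forall t, 0 <= w t) -> (forall t, 0 <= a t) ->
  (\sum_t w t * a t) `^ p <= (\sum_t w t) `^ (p - 1) * \sum_t w t * a t `^ p.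
Proof.
move=> p1 w0 a0.
have p0 : 0 < p by lra.
set S := \sum_t w t * a t; set W := \sum_t w t.
have S0 : 0 <= S by apply: sumr_ge0 => t _; rewrite mulr_ge0.
have W0 : 0 <= W by apply: sumr_ge0.
have [->|Sn0] := eqVneq S 0.
  by rewrite powR0 ?gt_eqF // mulr_ge0 ?powR_ge0 // sumr_ge0 // => t _; rewrite mulr_ge0 ?powR_ge0.
have Sp : 0 < S by rewrite lt_neqAle eq_sym Sn0.
have Wp : 0 < W.
  rewrite lt_neqAle W0 andbT; apply/eqP => W0'.
  have wz : forall t, w t = 0.
    by move=> t; apply: (psumr_eq0P _ (esym W0')) => // i _; apply: w0.
  by move: Sn0; rewrite /S big1 ?eqxx // => t _; rewrite wz mul0r.
set m := S / W.
have m0 : 0 < m by rewrite divr_gt0.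
have key : forall t, w t * (m `^ p * (1 + p * (a t / m - 1))) <= w t * a t `^ p.
  move=> t; apply: ler_wpM2l => //.
  have -> : a t `^ p = m `^ p * (a t / m) `^ p.
    rewrite -powRM; last by rewrite divr_ge0 // ltW.
      by congr (_ `^ _); field; rewrite gt_eqF.
    exact: ltW.
  apply: ler_wpM2l; first by rewrite powR_ge0.
  exact: (@bernoulliR R p (a t / m) p1 (divr_ge0 (a0 t) (ltW m0))).
have sumk : \sum_t w t * (m `^ p * (1 + p * (a t / m - 1))) = m `^ p * W.
  have -> : \sum_t w t * (m `^ p * (1 + p * (a t / m - 1))) =
     m `^ p * ((1 - p) * W + p / m * S).
    rewrite /W /S [(1 - p) * _]mulr_sumr [p / m * _]mulr_sumr -big_split /= mulr_sumr.
    by apply: eq_bigr => t _; field; rewrite gt_eqF.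
  by rewrite /m; congr (_ * _); field; rewrite !gt_eqF.
have : m `^ p * W <= \sum_t w t * a t `^ p.
  by rewrite -sumk; apply: ler_sum => t _; apply: key.
move=> h.
have -> : S = W * m by rewrite /m; field; rewrite gt_eqF.
rewrite powRM; [|exact: ltW|exact: ltW].
rewrite -(mulr_powRB1 (ltW Wp) p0) [W * _]mulrC -mulrA.
apply: ler_wpM2l; first by rewrite powR_ge0.
by rewrite mulrC.
Qed.

Lemma term_le_sum (R : realType) (T : finType) (f : T -> R) (t : T) :
  (forall i, 0 <= f i) -> f t <= \sum_i f i.
Proof.
move=> f0; rewrite (bigD1 t) //= lerDl; exact: sumr_ge0.
Qed.

Lemma supaddR (R : realType) (T : finType) (w a : T -> R) (p : R) : 1 <= p ->
  (forall t, 1 <= w t) -> (forall t, 0 <= a t) ->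
  \sum_t w t * a t `^ p <= (\sum_t w t * a t) `^ p.
Proof.
move=> p1 w1 a0.
have p0 : 0 < p by lra.
have p10 : 0 <= p - 1 by lra.
set S := \sum_t w t * a t.
have wa0 : forall t, 0 <= w t * a t.
  by move=> t; rewrite mulr_ge0 // (le_trans ler01).
have S0 : 0 <= S by apply: sumr_ge0.
rewrite -(mulr_powRB1 S0 p0) /S mulr_suml.
apply: ler_sum => t _.
rewrite -(mulr_powRB1 (a0 t) p0) mulrA.
apply: ler_wpM2l => //.
apply: ge0_ler_powR => //; rewrite ?nnegrE //.
apply: (@le_trans _ _ (w t * a t)); last exact: (@term_le_sum _ _ (fun i => w i * a i) t wa0).
by rewrite ler_peMl.
Qed.

Section Dot.
Variables (R : realType) (T : finType).
Definition dt (x y : T -> R) := \sum_t x t * y t.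

Lemma dt_lin (x y z : T -> R) c :
  dt (fun t => x t + c * y t) z = dt x z + c * dt y z.
Proof.
rewrite /dt mulr_sumr -big_split /=; apply: eq_bigr => t _; ring.
Qed.

Lemma dt_addl (x y z : T -> R) :
  dt (fun t => x t + y t) z = dt x z + dt y z.
Proof. by rewrite /dt -big_split /=; apply: eq_bigr => t _; ring. Qed.

Lemma dtC (x y : T -> R) : dt x y = dt y x.
Proof. by apply: eq_bigr => t _; rewrite mulrC. Qed.

Lemma dt_sumr (J : Type) (s : seq J) (f : J -> R) (g : J -> T -> R) (x : T -> R) :
  dt x (fun t => \sum_(i <- s) f i * g i t) = \sum_(i <- s) f i * dt x (g i).
Proof.
rewrite /dt.
under eq_bigr => t _ do rewrite mulr_sumr.
rewrite exchange_big /=; apply: eq_bigr => i _.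
by rewrite mulr_sumr; apply: eq_bigr => t _; ring.
Qed.

Lemma dt_self0 (x : T -> R) : dt x x = 0 -> forall t, x t = 0.
Proof.
move=> h t; apply/eqP; rewrite -sqrf_eq0; apply/eqP.
by apply: (psumr_eq0P _ h) => // i _; rewrite -expr2 sqr_ge0.
Qed.

Lemma dt0r (x y : T -> R) : (forall t, y t = 0) -> dt x y = 0.
Proof. by move=> h; rewrite /dt big1 // => t _; rewrite h mulr0. Qed.

Lemma dt_ext (x x' y : T -> R) : (forall t, x t = x' t) -> dt x y = dt x' y.
Proof. by move=> h; apply: eq_bigr => t _; rewrite h. Qed.
End Dot.

Lemma proj_seq (R : realType) (T : finType) (J : eqType) (b : J -> T -> R) (s : seq J) :
  uniq s -> forall x : T -> R, exists w : J -> R, forall j, j \in s ->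
  dt (fun t => x t + \sum_(i <- s) w i * b i t) (b j) = 0.
Proof.
elim: s => [_ x|a s IH]; first by exists (fun _ => 0).
rewrite cons_uniq => /andP[anin us] x.
have [wa hwa] := IH us (b a).
have [w1 hw1] := IH us x.
set b' := fun t => b a t + \sum_(i <- s) wa i * b i t.
set x1 := fun t => x t + \sum_(i <- s) w1 i * b i t.
set c := if dt b' b' == 0 then 0 else - dt x1 b' / dt b' b'.
exists (fun i => if i == a then c else w1 i + c * wa i) => j.
set x2 := fun t => _.
have ex2 : forall t, x2 t = x1 t + c * b' t.
  move=> t; rewrite /x2 /x1 /b' big_cons eqxx.
  rewrite (eq_big_seq (fun i => w1 i * b i t + c * (wa i * b i t))); last first.
    move=> i iS; have -> : (i == a) = false by apply/eqP => e; move: anin; rewrite -e iS.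
    by rewrite mulrDl mulrA.
  rewrite big_split /= -mulr_sumr; ring.
have d2 : forall y, dt x2 y = dt x1 y + c * dt b' y.
  by move=> y; rewrite (dt_ext y ex2) dt_lin.
have hs : forall j, j \in s -> dt x2 (b j) = 0.
  by move=> i iS; rewrite d2 hw1 // hwa // mulr0 addr0.
have hb' : dt x2 b' = 0.
  rewrite d2 /c; case: eqP => [e|ne].
    by rewrite mul0r addr0; apply: dt0r; exact: dt_self0 e.
  by field; apply/eqP.
rewrite in_cons => /orP[/eqP->|js]; last exact: hs.
have eba : forall t, b a t = b' t + \sum_(i <- s) (- wa i) * b i t.
  move=> t; rewrite /b' -addrA -big_split /=.
  by rewrite big1_seq ?addr0 // => i _; ring.
rewrite (dtC x2) (dt_ext x2 eba) dt_addl (dtC b') hb' add0r dtC dt_sumr.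
by rewrite big1_seq // => i /= iS; rewrite hs // mulr0.
Qed.

Lemma proj_fin (R : realType) (T J : finType) (b : J -> T -> R) (x : T -> R) :
  exists w : J -> R, forall j,
  dt (fun t => x t + \sum_i w i * b i t) (b j) = 0.
Proof.
have [w hw] := proj_seq b (index_enum_uniq J) x.
by exists w => j; apply: hw; rewrite mem_index_enum.
Qed.



Section Comb.
Variables (R : realType) (n : nat).

Lemma sgn_gen (A B : {set 'I_n}) (a : 'I_n) : A \subset B -> B :\: A = [set a] ->
  sgn R A B = (-1) ^+ #|[set u in B | (u < a)%N]|.
Proof.
move=> hAB hD; rewrite /sgn hAB hD cards1 /=.
case: pickP => [x /set1P -> //|/(_ a)]; by rewrite set11.
Qed.

Lemma sgn_nz (A B : {set 'I_n}) : sgn R A B != 0 ->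
  (A \subset B) && (#|B :\: A| == 1)%N.
Proof. by rewrite /sgn; case: ifP => //; rewrite eqxx. Qed.

Lemma dd_core (K : {set {set 'I_n}}) (hK : is_simplicial_complex K)
  (k : nat) (nu sigma : {set 'I_n}) :
  sigma \in K -> #|nu| = k -> #|sigma| = k.+2 ->
  \sum_(tau : simplex K k.+1) sgn R nu (val tau) * sgn R (val tau) sigma = 0.
Proof.
move=> sK cnu csig.
have [nus|nnus] := boolP (nu \subset sigma); last first.
  apply: big1 => tau _.
  have [e1|n1] := eqVneq (sgn R nu (val tau)) 0; first by rewrite e1 mul0r.
  have [e2|n2] := eqVneq (sgn R (val tau) sigma) 0; first by rewrite e2 mulr0.
  move: (sgn_nz n1) (sgn_nz n2) => /andP[h1 _] /andP[h2 _].
  by move: nnus; rewrite (fintype.subset_trans h1 h2).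
have : #|sigma :\: nu| == 2%N by rewrite cardsDS // csig cnu; apply/eqP; lia.
case/cards2P => u0 [v0 [nuv0 eD0]].
wlog uv : u0 v0 nuv0 eD0 / (u0 < v0)%N.
  move=> W; case: (ltngtP u0 v0) => h; first exact: (W u0 v0).
    by apply: (W v0 u0); rewrite 1?eq_sym // eD0 finset.setUC.
  by move: nuv0; rewrite (val_inj h) eqxx.
have hsig : forall y, (y \in sigma) = [|| y == u0, y == v0 | y \in nu].
  move=> y; have [ynu|ynu] := boolP (y \in nu).
    by rewrite !orbT (fintype.subsetP nus).
  rewrite orbF; have := congr1 (fun S : {set 'I_n} => y \in S) eD0 => /=.
  by rewrite !inE ynu /=.
have unu : u0 \notin nu.
  by apply/negP => h; have := congr1 (fun S : {set 'I_n} => u0 \in S) eD0; rewrite /= !inE h eqxx.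
have vnu : v0 \notin nu.
  by apply/negP => h; have := congr1 (fun S : {set 'I_n} => v0 \in S) eD0; rewrite /= !inE h eqxx orbT.
have sub1 : forall x, (x == u0) || (x == v0) -> x |: nu \subset sigma.
  move=> x hx; apply/fintype.subsetP => y; rewrite !inE => /orP[/eqP->|ynu].
    by rewrite hsig; case/orP: hx => ->; rewrite ?orbT.
  by rewrite hsig ynu !orbT.
have P : forall x, (x == u0) || (x == v0) -> (x |: nu \in K) && (#|x |: nu| == k.+1)%N.
  move=> x hx; apply/andP; split; first exact: (hK _ _ sK (sub1 x hx)).
  rewrite cardsU1 cnu.
  have -> : x \notin nu by case/orP: hx => /eqP->.
  by [].
have hu0 : (u0 == u0) || (u0 == v0) by rewrite eqxx.
have hv0 : (v0 == u0) || (v0 == v0) by rewrite eqxx orbT.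
set t1 : simplex K k.+1 := exist _ (u0 |: nu) (P u0 hu0).
set t2 : simplex K k.+1 := exist _ (v0 |: nu) (P v0 hv0).
have t12 : t2 != t1.
  apply/eqP => /(congr1 val) /= /(congr1 (fun S : {set 'I_n} => u0 \in S)).
  by rewrite !inE eqxx (negbTE unu) orbF (negbTE nuv0).
rewrite (bigD1 t1) // (bigD1 t2) //= big1 ?addr0; last first.
  move=> tau /andP[nt1 nt2].
  have [e1|n1] := eqVneq (sgn R nu (val tau)) 0; first by rewrite e1 mul0r.
  have [e2|n2] := eqVneq (sgn R (val tau) sigma) 0; first by rewrite e2 mulr0.
  move: (sgn_nz n1) (sgn_nz n2) => /andP[h1 /cards1P[x ex]] /andP[h2 _].
  have xtau : x \in val tau :\: nu by rewrite ex set11.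
  have tauE : val tau = x |: nu.
    by rewrite -(setID (val tau) nu) (finset.setIidPr h1) ex finset.setUC.
  move: xtau; rewrite inE => /andP[xnu xt].
  have : x \in sigma by apply: (fintype.subsetP h2).
  rewrite hsig (negbTE xnu) orbF => /orP[/eqP xu|/eqP xv].
    by move: nt1; rewrite -(inj_eq val_inj) /= tauE xu eqxx.
  by move: nt2; rewrite -(inj_eq val_inj) /= tauE xv eqxx.
rewrite /=.
have D1 : forall x, x \notin nu -> (x |: nu) :\: nu = [set x].
  move=> x xn; apply/setP => y; rewrite !inE.
  by have [->|yx] := eqVneq y x; [rewrite xn | case: (y \in nu)].
have Du : sigma :\: (u0 |: nu) = [set v0].
  apply/setP => y; rewrite !inE hsig.
  have [->|yv] := eqVneq y v0; first by rewrite eq_sym (negbTE nuv0) (negbTE vnu) orbT.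
  by case: (y == u0); case: (y \in nu).
have Dv : sigma :\: (v0 |: nu) = [set u0].
  apply/setP => y; rewrite !inE hsig.
  have [->|yu] := eqVneq y u0; first by rewrite (negbTE nuv0) (negbTE unu).
  by case: (y == v0); case: (y \in nu).
have sub0 : forall x, nu \subset x |: nu.
  by move=> x; apply/fintype.subsetP => y yn; rewrite !inE yn orbT.
rewrite (sgn_gen (sub0 u0) (D1 _ unu)) (sgn_gen (sub1 u0 hu0) Du).
rewrite (sgn_gen (sub0 v0) (D1 _ vnu)) (sgn_gen (sub1 v0 hv0) Dv).
have E1 : [set y in u0 |: nu | (y < u0)%N] = [set y in sigma | (y < u0)%N].
  apply/setP => y; rewrite !inE hsig.
  have [->|yv] := eqVneq y v0; last by case: (y == u0).
  by rewrite ltnNge (ltnW uv) !andbF.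
have E2 : [set y in sigma | (y < v0)%N] = u0 |: [set y in v0 |: nu | (y < v0)%N].
  apply/setP => y; rewrite !inE hsig.
  have [->|yu] := eqVneq y u0; first by rewrite uv.
  by [].
have u0n : u0 \notin [set y in v0 |: nu | (y < v0)%N].
  by rewrite !inE (negbTE nuv0) (negbTE unu).
rewrite E1 E2 cardsU1 u0n add1n exprS.
ring.
Qed.

Lemma sgn0_1 (tau : {set 'I_n}) : #|tau| = 1%N -> sgn R (finset.set0 : {set 'I_n}) tau = 1.
Proof.
move=> /eqP /cards1P [a ->].
rewrite (sgn_gen (a:=a) (finset.sub0set _)); last by rewrite finset.setD0.
have -> : [set u in [set a] | (u < a)%N] = finset.set0.
  by apply/setP => u; rewrite !inE; case: eqP => [->|]; rewrite ?ltnn.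
by rewrite finset.cards0.
Qed.

Lemma simplex_props (K : {set {set 'I_n}}) k (t : simplex K k) :
  (val t \in K) /\ #|val t| = k.
Proof. by case: t => A /= /andP[h /eqP]. Qed.

Lemma BT_im (K : {set {set 'I_n}}) (hK : is_simplicial_complex K) (d : nat)
  (y : Sig K d -> R) : imBT y -> forall sigma, BT y sigma = 0.
Proof.
case: d y => [|d'] y /=.
  move=> [c ->] sigma; rewrite /BT.
  have [sK cs] := simplex_props sigma.
  have -> : \sum_(tau : Sig K 0) sgn R (val tau) (val sigma) * c =
     (\sum_(tau : Sig K 0) sgn R finset.set0 (val tau) * sgn R (val tau) (val sigma)) * c.
    rewrite mulr_suml; apply: eq_bigr => tau _; have [_ ct] := simplex_props tau.
    by rewrite sgn0_1 // mul1r.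
  by rewrite (@dd_core K hK 0 finset.set0 (val sigma) sK (finset.cards0 _) cs) mul0r.
move=> [w ->] sigma; rewrite /BT.
have [sK cs] := simplex_props sigma.
under eq_bigr => tau _ do rewrite mulr_sumr.
rewrite exchange_big /= big1 // => nu _.
have [_ cn] := simplex_props nu.
have -> : \sum_(tau : Sig K d'.+1) sgn R (val tau) (val sigma) * (sgn R (val nu) (val tau) * w nu) = w nu * \sum_(tau : Sig K d'.+1) sgn R (val nu) (val tau) * sgn R (val tau) (val sigma).
  by rewrite mulr_sumr; apply: eq_bigr => tau _; ring.
by rewrite (@dd_core K hK d'.+1 (val nu) (val sigma) sK cn cs) mulr0.
Qed.
End Comb.

Local Open Scope classical_set_scope.
Local Open Scope ring_scope.


Lemma inf_le_elt (R : realType) (E : set R) x : (forall r, E r -> 0 <= r) -> E x -> inf E <= x.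
Proof. by move=> h Ex; apply: ge_inf => //; exists 0 => r /h. Qed.

Lemma inf_ge0 (R : realType) (E : set R) : (forall r, E r -> 0 <= r) -> 0 <= inf E.
Proof.
move=> h; have [[x Ex]|ne] := pselect (E !=set0).
  by apply: lb_le_inf; [exists x | move=> r /h].
have -> : E = set0.
  by apply/seteqP; split => // r Er; apply: ne; exists r.
by rewrite inf0.
Qed.

Section Main.
Variables (R : realType) (n : nat) (K : {set {set 'I_n}}).
Hypothesis hK : is_simplicial_complex K.
Variable d : nat.
Hypothesis hdeg : forall tau : Sig K d, (0 < deg tau)%N.

Local Notation T := (Sig K d).

Lemma deg_ge1 (t : T) : 1 <= (deg t)%:R :> R.
Proof. by rewrite ler1n hdeg. Qed.

Lemma im0 : imBT (fun _ : T => 0 : R).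
Proof.
case: d hdeg => [|d'] _ /=; first by exists 0.
by exists (fun _ => 0); apply: funext => t; rewrite big1 // => i _; rewrite mulr0.
Qed.

Lemma imD (y1 y2 : T -> R) : imBT y1 -> imBT y2 -> imBT (fun t => y1 t + y2 t).
Proof.
case: d y1 y2 hdeg => [|d'] y1 y2 _ /=.
  by move=> [c1 ->] [c2 ->]; exists (c1 + c2).
move=> [w1 ->] [w2 ->]; exists (fun i => w1 i + w2 i); apply: funext => t.
by rewrite -big_split; apply: eq_bigr => i _ /=; rewrite mulrDr.
Qed.

Lemma imN (y : T -> R) : imBT y -> imBT (fun t => - y t).
Proof.
case: d y hdeg => [|d'] y _ /=; first by move=> [c ->]; exists (- c).
move=> [w ->]; exists (fun i => - w i); apply: funext => t.
by rewrite -sumrN; apply: eq_bigr => i _; rewrite mulrN.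
Qed.

Lemma proj_im (x : T -> R) : exists y, imBT y /\
  forall y', imBT y' -> dotv (fun t => x t + y t) y' = 0.
Proof.
case: d x hdeg => [|d'] x _ /=.
  have [w hw] := proj_fin (fun (_ : unit) (_ : Sig K 0) => 1 : R) x.
  exists (fun _ => w tt); split; first by exists (w tt).
  move=> y' [c ->]; rewrite /dotv.
  have := hw tt; rewrite /dt => e.
  transitivity ((\sum_t (x t + \sum_i w i * 1) * 1) * c).
    rewrite mulr_suml; apply: eq_bigr => t _.
    by rewrite (big_pred1 tt) ?mulr1 //; case.
  by rewrite e mul0r.
pose b := fun (nu : Sig K d') (tau : Sig K d'.+1) => sgn R (val nu) (val tau).
have [w hw] := proj_fin b x.
exists (fun t => \sum_i w i * b i t); split.
  by exists w; apply: funext => t; apply: eq_bigr => i _; rewrite mulrC.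
move=> y' [w' ->]; rewrite /dotv.
transitivity (\sum_nu w' nu * dt (fun t => x t + \sum_i w i * b i t) (b nu)).
  rewrite -dt_sumr /dt; apply: eq_bigr => t _; congr (_ * _).
  by apply: eq_bigr => i _; rewrite mulrC.
by rewrite big1 // => nu _; rewrite hw mulr0.
Qed.


Lemma BT_add (x y : T -> R) s : BT (fun t => x t + y t) s = BT x s + BT y s.
Proof. by rewrite /BT -big_split; apply: eq_bigr => t _ /=; rewrite mulrDr. Qed.

Lemma BT_shift (x y : T -> R) s : imBT y -> BT (fun t => x t + y t) s = BT x s.
Proof. by move=> hy; rewrite BT_add (BT_im hK hy) addr0. Qed.

Lemma pdeg_ge0 q (z : T -> R) : 0 <= pdegnormp q z.
Proof. by apply: sumr_ge0 => t _; rewrite mulr_ge0 ?powR_ge0. Qed.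

Lemma dist_ge0 q (x : T -> R) : 0 <= distp q x.
Proof. by apply: inf_ge0 => r [y _ <-]; apply: pdeg_ge0. Qed.

Lemma dist_le q (x y : T -> R) : imBT y -> distp q x <= pdegnormp q (fun t => x t + y t).
Proof. by move=> hy; apply: inf_le_elt; [move=> r [z _ <-]; apply: pdeg_ge0 | exists y]. Qed.

Lemma dist_lb q (x : T -> R) a :
  (forall y, imBT y -> a <= pdegnormp q (fun t => x t + y t)) -> a <= distp q x.
Proof.
move=> h; apply: lb_le_inf; first by exists (pdegnormp q (fun t => x t + 0)); exists (fun _ => 0) => //; exact: im0.
by move=> r [y hy <-]; apply: h.
Qed.

Lemma dist_shift q (x y0 : T -> R) : imBT y0 -> distp q (fun t => x t + y0 t) = distp q x.
Proof.
move=> hy0; rewrite /distp; congr inf; apply/seteqP; split => r [y hy <-].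
  exists (fun t => y0 t + y t); first exact: imD.
  by congr pdegnormp; apply: funext => t; rewrite addrA.
exists (fun t => y t + - y0 t); first by apply: imD => //; exact: imN.
by congr pdegnormp; apply: funext => t; rewrite -addrA (addrCA (y0 t)) subrr addr0.
Qed.

Lemma pdeg1 (z : T -> R) : pdegnormp 1 z = \sum_t (deg t)%:R * `|z t|.
Proof. by apply: eq_bigr => t _; rewrite powRr1. Qed.

Lemma pnorm1 (U : finType) (v : U -> R) : pnormp 1 v = \sum_t `|v t|.
Proof. by apply: eq_bigr => t _; rewrite powRr1. Qed.


Lemma nonzero_ex (U : finType) (x : U -> R) : x <> (fun _ => 0) -> exists t, x t != 0.
Proof.
move=> hx; have [//|ne] := pselect (exists t, x t != 0).
exfalso; apply: hx; apply: funext => t.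
by case: (eqVneq (x t) 0) => // h; case: ne; exists t.
Qed.

Lemma good_dist_pos (x : T -> R) : x <> (fun _ => 0) ->
  (forall y, imBT y -> dotv x y = 0) -> 0 < distp 1 x.
Proof.
move=> hx hort; have [t0 xt0] := nonzero_ex hx.
set Mx := \sum_t `|x t|.
have Mx0 : 0 < Mx.
  apply: (lt_le_trans _ (@term_le_sum _ _ (fun t => `|x t|) t0 _)) => //.
  by rewrite normr_gt0.
set Q := \sum_t x t * x t.
have Q0 : 0 < Q.
  apply: (lt_le_trans _ (@term_le_sum _ _ (fun t => x t * x t) t0 _)).
    by rewrite -expr2 exprn_even_gt0 // xt0.
  by move=> t; rewrite -expr2 sqr_ge0.
apply: (lt_le_trans (divr_gt0 Q0 Mx0)); apply: dist_lb => y hy.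
rewrite ler_pdivrMr // pdeg1.
have -> : Q = \sum_t x t * (x t + y t).
  have := hort y hy; rewrite /dotv => e.
  transitivity (Q + \sum_t x t * y t); first by rewrite e addr0.
  by rewrite /Q -big_split; apply: eq_bigr => t _ /=; rewrite mulrDr.
apply: (le_trans (ler_sum _ (fun t _ => ler_norm _))) => /=.
rewrite mulr_suml; apply: ler_sum => t _.
rewrite normrM mulrC; apply: ler_pM => //.
  by rewrite -[X in X <= _]mul1r; apply: ler_wpM2r => //; exact: deg_ge1.
exact: (@term_le_sum _ _ (fun t => `|x t|) t (fun i => normr_ge0 _)).
Qed.


Lemma vol_pos (t : T) : 0 < vol R K d.
Proof.
apply: (lt_le_trans _ (@term_le_sum _ _ (fun t => (deg t)%:R : R) t _)) => //.
  exact: (lt_le_trans ltr01 (deg_ge1 t)).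
Qed.

Lemma sgn_le1 (A B : {set 'I_n}) : `|sgn R A B| <= 1.
Proof.
rewrite /sgn; case: ifP => _; last by rewrite normr0.
by case: pickP => [v _|_]; rewrite ?normr_sign ?normr0.
Qed.

Lemma BT_bound (x : T -> R) s : `|BT x s| <= distp 1 x.
Proof.
apply: dist_lb => y hy; rewrite -(BT_shift x s hy) pdeg1 /BT.
apply: (le_trans (ler_norm_sum _ _ _)); apply: ler_sum => t _.
rewrite normrM; apply: ler_wpM2r => //.
exact: (le_trans (sgn_le1 _ _) (deg_ge1 t)).
Qed.

Lemma upper_ratio (x : T -> R) (p : R) : 1 <= p -> 0 < distp 1 x -> 0 < vol R K d ->
  pnormp p (BT x) / distp p x <= vol R K d `^ (p - 1) * (pnormp 1 (BT x) / distp 1 x).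
Proof.
move=> p1 D0 V0.
have p0 : 0 < p by lra.
have p10 : 0 <= p - 1 by lra.
set D := distp 1 x; set Dp := distp p x; set V := vol R K d.
have V'0 : 0 < V `^ (p - 1) by apply: powR_gt0.
have hc : D `^ p / V `^ (p - 1) <= Dp.
  apply: dist_lb => y hy; rewrite ler_pdivrMr //.
  apply: (@le_trans _ _ ((pdegnormp 1 (fun t => x t + y t)) `^ p)).
    apply: ge0_ler_powR; rewrite ?nnegrE ?(ltW p0) ?(ltW D0) ?pdeg_ge0 //.
    exact: dist_le.
  rewrite pdeg1 mulrC.
  exact: (@jensenR _ _ (fun t => (deg t)%:R) (fun t => `|x t + y t|) p p1 (fun t => ler0n _ _) (fun t => normr_ge0 _)).
have hb : pnormp p (BT x) <= D `^ (p - 1) * pnormp 1 (BT x).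
  rewrite pnorm1 mulr_sumr; apply: ler_sum => s _.
  rewrite -(mulr_powRB1 (normr_ge0 _) p0) mulrC.
  apply: ler_wpM2r => //; apply: ge0_ler_powR; rewrite ?nnegrE ?(ltW D0) //.
  exact: BT_bound.
have Dp0 : 0 < Dp by apply: lt_le_trans hc; rewrite divr_gt0 ?powR_gt0.
rewrite ler_pdivrMr //; apply: (le_trans hb).
apply: (@le_trans _ _ (V `^ (p - 1) * (pnormp 1 (BT x) / D) * (D `^ p / V `^ (p - 1)))).
  rewrite -(mulr_powRB1 (ltW D0) p0) -/D le_eqVlt; apply/orP; left; apply/eqP.
  by field; rewrite !gt_eqF.

apply: ler_wpM2l => //; rewrite mulr_ge0 ?divr_ge0 ?(ltW D0) ?powR_ge0 //.
by apply: sumr_ge0 => s _; rewrite powR_ge0.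
Qed.


Lemma distp_lower (x : T -> R) (p : R) : 1 <= p -> 0 < vol R K d ->
  distp 1 x `^ p / vol R K d `^ (p - 1) <= distp p x.
Proof.
move=> p1 V0; have p0 : 0 < p by lra.
have V'0 : 0 < vol R K d `^ (p - 1) by apply: powR_gt0.
apply: dist_lb => y hy; rewrite ler_pdivrMr //.
apply: (@le_trans _ _ ((pdegnormp 1 (fun t => x t + y t)) `^ p)).
  apply: ge0_ler_powR; rewrite ?nnegrE ?(ltW p0) ?dist_ge0 ?pdeg_ge0 //.
  exact: dist_le.
rewrite pdeg1 mulrC.
exact: (@jensenR _ _ (fun t => (deg t)%:R) (fun t => `|x t + y t|) p p1 (fun t => ler0n _ _) (fun t => normr_ge0 _)).
Qed.

Lemma lower_ratio (x : T -> R) (p h : R) : 1 <= p -> 0 < distp 1 x -> 0 < vol R K d ->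
  0 <= h -> h <= pnormp 1 (BT x) / distp 1 x ->
  h `^ p / (#|{: Sig K d.+1}|%:R) `^ (p - 1) <= pnormp p (BT x) / distp p x.
Proof.
move=> p1 D0 V0 h0 hh.
have p0 : 0 < p by lra.
set D := distp 1 x; set Dp := distp p x; set N' := _ `^ (p - 1).
have Dp0 : 0 < Dp.
  apply: lt_le_trans (distp_lower x p1 V0); rewrite divr_gt0 ?powR_gt0 //.
have hd : Dp `^ p^-1 <= D.
  apply: dist_lb => y hy.
  have e : pdegnormp 1 (fun t => x t + y t) =
     (pdegnormp 1 (fun t => x t + y t) `^ p) `^ p^-1.
    by rewrite -powRrM divff ?gt_eqF // powRr1 // pdeg_ge0.
  rewrite e; apply: ge0_ler_powR; rewrite ?nnegrE ?invr_ge0 ?(ltW p0) ?(ltW Dp0) ?powR_ge0 //.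
  apply: (le_trans (dist_le p x hy)); rewrite pdeg1.
  exact: (@supaddR _ _ (fun t => (deg t)%:R) (fun t => `|x t + y t|) p p1 (@deg_ge1) (fun t => normr_ge0 _)).
have hd' : Dp <= D `^ p.
  have -> : Dp = (Dp `^ p^-1) `^ p by rewrite -powRrM mulVf ?gt_eqF // powRr1 // ltW.
  by apply: ge0_ler_powR; rewrite ?nnegrE ?(ltW p0) ?powR_ge0 ?(ltW D0).
have he : h * D <= pnormp 1 (BT x) by rewrite -ler_pdivlMr.
have hf : (pnormp 1 (BT x)) `^ p <= N' * pnormp p (BT x).
  have := @jensenR _ _ (fun _ : Sig K d.+1 => 1) (fun s => `|BT x s|) p p1 (fun _ => ler01) (fun _ => normr_ge0 _).
  rewrite pnorm1 /N' sumr_const.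
  have -> : \sum_s 1 * `|BT x s| = \sum_s `|BT x s| by apply: eq_bigr => s _; rewrite mul1r.
  have -> : \sum_s 1 * `|BT x s| `^ p = pnormp p (BT x) by apply: eq_bigr => s _; rewrite mul1r.
  by [].
have Sp0 : 0 <= pnormp p (BT x) by apply: sumr_ge0 => s _; rewrite powR_ge0.
have : 0 <= N' by rewrite powR_ge0.
rewrite le_eqVlt => /orP[/eqP N0|N0].
  by rewrite -N0 invr0 mulr0 divr_ge0 // ltW.
rewrite ler_pdivrMr // mulrAC ler_pdivlMr //.
apply: (le_trans (ler_wpM2l (powR_ge0 _ _) hd')).
rewrite -powRM ?(ltW D0) // mulrC.
rewrite [X in _ <= X]mulrC; apply: le_trans hf; rewrite mulrC.
apply: ge0_ler_powR; rewrite ?nnegrE ?(ltW p0) ?mulr_ge0 ?(ltW D0) //.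
  by apply: sumr_ge0 => s _; rewrite powR_ge0.
Qed.


Lemma proj_good (x : T -> R) : ~ imBT x -> exists x' : T -> R,
  [/\ x' <> (fun _ => 0), (forall y, imBT y -> dotv x' y = 0),
      (forall s, BT x' s = BT x s) & distp 1 x' = distp 1 x].
Proof.
move=> nx; have [y [hy ho]] := proj_im x.
exists (fun t => x t + y t); split => //.
- move=> e; apply: nx.
  have -> : x = fun t => - y t.
    apply: funext => t; have := congr1 (fun f => f t) e => /= /eqP.
    by rewrite addr_eq0 => /eqP.
  exact: imN.
- by move=> s; apply: BT_shift.
- exact: dist_shift.
Qed.

Lemma good_notim (x : T -> R) : x <> (fun _ => 0) ->
  (forall y, imBT y -> dotv x y = 0) -> ~ imBT x.
Proof.
move=> hx ho hi; apply: hx; apply: funext => t.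
by apply: (@dt_self0 _ _ x); exact: (ho x hi).
Qed.

Lemma ratio_ge0 q (x : T -> R) : 0 <= pnormp q (BT x) / distp q x.
Proof.
by rewrite divr_ge0 ?dist_ge0 // sumr_ge0 // => s _; rewrite powR_ge0.
Qed.

Lemma main_ineq (p : R) (hp : 1 <= p) :
  (cheeger R K d) `^ p / (#|{: Sig K d.+1}|%:R) `^ (p - 1) <= lambda_up K d p
  /\ lambda_up K d p <= (vol R K d) `^ (p - 1) * cheeger R K d.
Proof.
have p0 : 0 < p by lra.
have Lge0 : forall r, [set r | exists x : T -> R, x <> (fun _ => 0) /\
    (forall y, imBT y -> dotv x y = 0) /\ r = pnormp p (BT x) / distp p x] r -> 0 <= r.
  by move=> r [x [_ [_ ->]]]; apply: ratio_ge0.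
have Hge0 : forall r, [set r | exists x : T -> R, ~ imBT x /\
    r = pnormp 1 (BT x) / distp 1 x] r -> 0 <= r.
  by move=> r [x [_ ->]]; apply: ratio_ge0.
have h0 : 0 <= cheeger R K d by apply: inf_ge0.
have l0 : 0 <= lambda_up K d p by apply: inf_ge0.
split.
  have [[x0 [x0n x0o]]|ng] := pselect (exists x : T -> R, x <> (fun _ => 0) /\
      (forall y, imBT y -> dotv x y = 0)).
    apply: lb_le_inf.
      by exists (pnormp p (BT x0) / distp p x0); exists x0.
    move=> r [x [xn [xo ->]]].
    have [t _] := nonzero_ex xn.
    apply: lower_ratio => //; first exact: good_dist_pos.
      exact: vol_pos t.
    apply: inf_le_elt => //; exists x; split => //; exact: good_notim.
  have -> : cheeger R K d = 0.
    rewrite /cheeger; have -> : forall E : set R, E = set0 -> inf E = 0 by move=> E ->; rewrite inf0.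
      by [].
    apply/seteqP; split => // r [x [nx _]].
    have [x' [x'n x'o _ _]] := proj_good nx.
    by apply: ng; exists x'.
  by rewrite powR0 ?gt_eqF // mul0r.
have [[x0 nx0]|ni] := pselect (exists x : T -> R, ~ imBT x).
  have [x0' [x0n _ _ _]] := proj_good nx0.
  have [t _] := nonzero_ex x0n.
  have V0 := vol_pos t.
  have a0 : 0 < vol R K d `^ (p - 1) by apply: powR_gt0.
  rewrite mulrC -ler_pdivrMr //.
  apply: lb_le_inf.
    by exists (pnormp 1 (BT x0) / distp 1 x0); exists x0.
  move=> r [x [nx ->]].
  have [x' [x'n x'o hB hD]] := proj_good nx.
  rewrite ler_pdivrMr // mulrC.
  apply: (@le_trans _ _ (pnormp p (BT x') / distp p x')).
    by apply: inf_le_elt => //; exists x'.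
  apply: (le_trans (upper_ratio hp (good_dist_pos x'n x'o) V0)).
  rewrite hD; apply: ler_wpM2l; first exact: ltW.
  have -> : BT x' = BT x by apply: funext.
  by [].
have -> : lambda_up K d p = 0.
  rewrite /lambda_up; have -> : forall E : set R, E = set0 -> inf E = 0 by move=> E ->; rewrite inf0.
    by [].
  apply/seteqP; split => // r [x [xn [xo _]]].
  by apply: ni; exists x; exact: good_notim.
by rewrite mulr_ge0 ?powR_ge0.
Qed.

End Main.

Unset Implicit Arguments.
Theorem proposition3p2 (R : realType) (n : nat) (K : {set {set 'I_n}})
  (hK : is_simplicial_complex K) (d : nat)
  (hdeg : forall tau : Sig K d, (0 < deg tau)%N) (p : R) (hp : 1 <= p) :
  (cheeger R K d) `^ p / (#|{: Sig K d.+1}|%:R) `^ (p - 1) <= lambda_up K d p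
  /\ lambda_up K d p <= (vol R K d) `^ (p - 1) * cheeger R K d.
Proof. exact: main_ineq. Qed.
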